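(* Assume $A\in\mathbb{R}^{n\times n}$ is $(c_A,\gamma_{sys})$-SED and $B\in\mathbb{R}^{n\times m}$ is $(c_B,\gamma_{sys})$-SED, with $\gamma_{sys}>0$ and $c_A,c_B\ge1$. Let $\kappa\ge1$ and $K\in\mathcal{K}^\kappa$ be $(c_K,\gamma_{sys})$-SED and such that $A+BK$ is $(\tau,\rho)$-stable. Fix $i\in[N]$. Then the solution $P_i$ of the Lyapunov equation $$P_i = S_i + [K]_{i:}^\top [R]_{ii}[K]_{i:} + (A+BK)^\top P_i (A+BK)$$ is $(c_{P_i},\gamma_{P_i})$-SED away from $i$, where $$c_{P_i} = \frac{\|S_i + [K]_{i:}^\top [R]_{ii}[K]_{i:}\|\,\tau^2}{1-e^{-2\rho}} + 2\big(\|[S]_{ii}\| + \|[R]_{ii}\|\,c_K^2\big),\qquad \gamma_{P_i} = \frac{\rho\,\gamma_{sys}}{\rho + \ln(N c_A + N^2 c_B c_K)}.$$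
   Context: $\|\cdot\|$ denotes the Euclidean norm / induced $\ell_2$ matrix norm. There are $N$ agents $[N]=\{1,\dots,N\}$ on an undirected graph with graph distance $\mathrm{dist}$ (so $\mathrm{dist}(i,i)=0$, symmetric, triangle inequality). Agent $i$ has state dimension $n_i$ and input dimension $m_i$, $n=\sum_i n_i$, $m=\sum_i m_i$; matrices are partitioned into blocks $[X]_{lj}$ with row indices of agent $l$ and column indices of agent $j$ (using $n$- or $m$-partitions as appropriate); $[X]_{i:}$ denotes the block row of agent $i$. The $\kappa$-neighborhood of $i$ is $\mathcal{N}_i^\kappa=\{j\in[N]:\mathrm{dist}(i,j)<\kappa\}$, and $\mathcal{K}^\kappa=\{K\in\mathbb{R}^{m\times n}: [K]_{ij}=0 \text{ whenever } j\notin\mathcal{N}_i^\kappa\}$. $S\in\mathbb{R}^{n\times n}$ and $R\in\mathbb{R}^{m\times m}$ are block-diagonal with $[S]_{ii}\succeq0$, $[R]_{ii}\succ0$; $S_i\in\mathbb{R}^{n\times n}$ (resp. $R_i\in\mathbb{R}^{m\times m}$) is the matrix whose only nonzero block is the $(i,i)$ block, equal to $[S]_{ii}$ (resp. $[R]_{ii}$). Definition ($(\tau,\rho)$-stability): $X$ is $(\tau,\rho)$-stable ($\tau\ge1,\rho>0$) if $\|X^k\|\le\tau e^{-\rho k}$ for all integers $k\ge0$. Definition (SED): $X$ is $(c,\gamma)$-SED if $\|[X]_{lj}\|\le c\,e^{-\gamma\,\mathrm{dist}(l,j)}$ for all $l,j$. Definition (SED away from $i$): $X$ is $(c,\gamma)$-SED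 away from $i$ if $\|[X]_{lj}\|\le c\,e^{-\gamma\max(\mathrm{dist}(i,l),\mathrm{dist}(i,j))}$ for all $l,j$. *)

(* Defs.v *)
From HB Require Import structures.
From mathcomp Require Import all_boot all_order all_algebra.
From mathcomp Require Import all_classical all_reals all_analysis.
Set Implicit Arguments. Unset Strict Implicit. Unset Printing Implicit Defensive.
Import Order.TTheory GRing.Theory Num.Theory.
Local Open Scope ring_scope.

Section Defs.
Variable R : realType.

Definition vnorm k (v : 'cV[R]_k) : R := Num.sqrt (\sum_i (v i 0) ^+ 2).

Definition opnorm p q (X : 'M[R]_(p, q)) : R :=
  sup [set vnorm (X *m v) | v in [set v : 'cV[R]_q | vnorm v = 1]].

(* Agents are 'I_N; coordinates are assigned to agents by a map
   ar : 'I_p -> 'I_N (nondecreasing = contiguous blocks).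
   Block [X]_{lj}: rows of agent l, columns of agent j (in increasing order). *)
Definition blk N p q (ar : 'I_p -> 'I_N) (ac : 'I_q -> 'I_N) (X : 'M[R]_(p, q))
  (l j : 'I_N) : 'M[R]_(#|[pred r | ar r == l]|, #|[pred c | ac c == j]|) :=
  \matrix_(a, b) X (enum_val a) (enum_val b).

Definition blkrow N p q (ar : 'I_p -> 'I_N) (X : 'M[R]_(p, q)) (l : 'I_N)
  : 'M[R]_(#|[pred r | ar r == l]|, q) :=
  \matrix_(a, c) X (enum_val a) c.

Definition only_blk N p (ar : 'I_p -> 'I_N) (X : 'M[R]_p) (i : 'I_N) : 'M[R]_p :=
  \matrix_(r, c) (if (ar r == i) && (ar c == i) then X r c else 0).

Definition block_diagonal N p (ar : 'I_p -> 'I_N) (X : 'M[R]_p) : Prop :=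
  forall r c, ar r != ar c -> X r c = 0.

Definition psd k (M : 'M[R]_k) : Prop :=
  M^T = M /\ forall v : 'cV[R]_k, 0 <= (v^T *m M *m v) 0 0.

Definition pd k (M : 'M[R]_k) : Prop :=
  M^T = M /\ forall v : 'cV[R]_k, v != 0 -> 0 < (v^T *m M *m v) 0 0.

Definition tr_stable k (X : 'M[R]_k) (tau rho : R) : Prop :=
  1 <= tau /\ 0 < rho /\
  forall t : nat, opnorm (X ^+ t) <= tau * expR (- (rho * t%:R)).

Definition SED N (dist : 'I_N -> 'I_N -> nat) p q
  (ar : 'I_p -> 'I_N) (ac : 'I_q -> 'I_N) (X : 'M[R]_(p, q)) (c g : R) : Prop :=
  forall l j, opnorm (blk ar ac X l j) <= c * expR (- (g * (dist l j)%:R)).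

Definition SED_away N (dist : 'I_N -> 'I_N -> nat) p q
  (ar : 'I_p -> 'I_N) (ac : 'I_q -> 'I_N) (X : 'M[R]_(p, q)) (c g : R)
  (i : 'I_N) : Prop :=
  forall l j, opnorm (blk ar ac X l j)
              <= c * expR (- (g * (maxn (dist i l) (dist i j))%:R)).

Definition in_Kkappa N (dist : 'I_N -> 'I_N -> nat) m n
  (agm : 'I_m -> 'I_N) (agn : 'I_n -> 'I_N) (kappa : nat) (K : 'M[R]_(m, n)) : Prop :=
  forall i j, ~~ (dist i j < kappa)%N -> blk agm agn K i j = 0.

End Defs.

(* Main.v *)
Require Import Defs.
From HB Require Import structures.
From mathcomp Require Import all_boot all_order all_algebra.
From mathcomp Require Import all_classical all_reals all_analysis.
From mathcomp Require Import ring lra zify.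
Import Order.TTheory GRing.Theory Num.Theory.
Local Open Scope ring_scope.
Set Implicit Arguments. Unset Strict Implicit. Unset Printing Implicit Defensive.
Section Norms.
Variable R : realType.

Lemma sum_inj_le (I J : finType) (f : I -> J) (F : J -> R) :
  injective f -> (forall j, 0 <= F j) -> \sum_i F (f i) <= \sum_j F j.
Proof.
move=> inj F0.
rewrite (bigID (mem (f @: [set: I])) predT F) /=.
have -> : \sum_(i | mem (f @: [set: I]) i) F i = \sum_i F (f i).
  transitivity (\sum_(i in [set: I]) F (f i)); last by apply: eq_bigl => i; rewrite finset.in_setT.
  by rewrite -(big_imset _ (in2W inj)).
by rewrite lerDl sumr_ge0.
Qed.

Definition dot k (u v : 'cV[R]_k) : R := (u^T *m v) 0 0.

Lemma dotE k (u v : 'cV[R]_k) : dot u v = \sum_i u i 0 * v i 0.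
Proof. by rewrite /dot mxE; apply: eq_bigr => i _; rewrite mxE. Qed.

Lemma vnormE k (v : 'cV[R]_k) : vnorm v = Num.sqrt (dot v v).
Proof. by rewrite /vnorm dotE; congr Num.sqrt; apply: eq_bigr => i _; rewrite expr2. Qed.

Lemma dot_ge0 k (v : 'cV[R]_k) : 0 <= dot v v.
Proof. by rewrite dotE sumr_ge0 // => i _; rewrite -expr2 sqr_ge0. Qed.

Lemma vnorm_ge0 k (v : 'cV[R]_k) : 0 <= vnorm v.
Proof. exact: sqrtr_ge0. Qed.

Lemma vnorm_sq k (v : 'cV[R]_k) : vnorm v ^+ 2 = dot v v.
Proof. by rewrite vnormE sqr_sqrtr // dot_ge0. Qed.

Lemma vnorm0 k : vnorm (0 : 'cV[R]_k) = 0.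
Proof. by rewrite vnormE dotE big1 ?sqrtr0 // => i _; rewrite mxE mul0r. Qed.

Lemma vnorm_eq0 k (v : 'cV[R]_k) : vnorm v = 0 -> v = 0.
Proof.
move=> h; have : dot v v = 0 by rewrite -vnorm_sq h expr0n.
rewrite dotE => /psumr_eq0P H.
have {}H := H (fun i _ => (ltac:(by rewrite -expr2 sqr_ge0) : 0 <= v i 0 * v i 0)).
apply/matrixP => i j; rewrite (ord1 j) mxE.
have /eqP := H i isT; rewrite -expr2.
by rewrite sqrf_eq0 => /eqP.
Qed.

Lemma dot_sym k (u v : 'cV[R]_k) : dot u v = dot v u.
Proof. by rewrite !dotE; apply: eq_bigr => i _; rewrite mulrC. Qed.

Lemma dot_mul p q (u : 'cV[R]_p) (X : 'M[R]_(p, q)) (w : 'cV[R]_q) :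
  dot u (X *m w) = dot (X^T *m u) w.
Proof. by rewrite /dot trmx_mul trmxK mulmxA. Qed.

Lemma dot_expand k (u v : 'cV[R]_k) (a b : R) :
  dot (a *: u - b *: v) (a *: u - b *: v) =
  a ^+ 2 * dot u u - 2 * a * b * dot u v + b ^+ 2 * dot v v.
Proof.
rewrite !dotE !mulr_sumr -sumrB -big_split /=; apply: eq_bigr => i _.
rewrite !mxE; ring.
Qed.

Lemma CS k (u v : 'cV[R]_k) : dot u v <= vnorm u * vnorm v.
Proof.
have [u0|] := eqVneq (vnorm u) 0.
  by rewrite (vnorm_eq0 u0) dotE big1 ?vnorm0 ?mul0r // => i _; rewrite mxE mul0r.
have [v0|] := eqVneq (vnorm v) 0.
  by rewrite (vnorm_eq0 v0) dotE big1 ?vnorm0 ?mulr0 // => i _; rewrite mxE mulr0.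
move=> nv nu.
have a0 : 0 < vnorm u by rewrite lt_neqAle eq_sym nu vnorm_ge0.
have b0 : 0 < vnorm v by rewrite lt_neqAle eq_sym nv vnorm_ge0.
have := dot_ge0 (vnorm v *: u - vnorm u *: v).
rewrite dot_expand -!vnorm_sq => h.
have hab : 0 < 2 * vnorm v * vnorm u by rewrite !mulr_gt0.
rewrite -(ler_pM2l hab); nra.
Qed.

Lemma vnormD k (u v : 'cV[R]_k) : vnorm (u + v) <= vnorm u + vnorm v.
Proof.
rewrite -(ger0_norm (addr_ge0 (vnorm_ge0 u) (vnorm_ge0 v))) -sqrtr_sqr.
rewrite vnormE ler_sqrt ?sqr_ge0 //.
have -> : dot (u + v) (u + v) = dot u u + 2 * dot u v + dot v v.
  rewrite !dotE mulr_sumr -!big_split /=; apply: eq_bigr => i _.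
  rewrite !mxE; ring.
have := CS u v; rewrite -!vnorm_sq; nra.
Qed.

Lemma vnormZ k (c : R) (v : 'cV[R]_k) : vnorm (c *: v) = `|c| * vnorm v.
Proof.
rewrite !vnormE -sqrtr_sqr -sqrtrM ?sqr_ge0 //; congr Num.sqrt.
rewrite !dotE mulr_sumr; apply: eq_bigr => i _; rewrite !mxE; ring.
Qed.

Lemma coord_le k (v : 'cV[R]_k) i : `|v i 0| <= vnorm v.
Proof.
rewrite -sqrtr_sqr /vnorm ler_sqrt; last by rewrite sumr_ge0 // => j _; rewrite sqr_ge0.
by rewrite (bigD1 i) //= lerDl sumr_ge0 // => j _; rewrite sqr_ge0.
Qed.

Lemma vnorm_coord_le k (w : 'cV[R]_k) (c : 'I_k -> R) (t : R) :
  0 <= t -> (forall r, `|w r 0| <= c r * t) ->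
  vnorm w <= Num.sqrt (\sum_r c r ^+ 2) * t.
Proof.
move=> t0 h.
rewrite -(ger0_norm t0) -sqrtr_sqr -sqrtrM; last by rewrite sumr_ge0 // => r _; rewrite sqr_ge0.
rewrite /vnorm ler_sqrt; last by rewrite mulr_ge0 ?sqr_ge0 // sumr_ge0 // => r _; rewrite sqr_ge0.
rewrite mulr_suml; apply: ler_sum => r _.
have h1 := h r; have h2 := normr_ge0 (w r 0).
rewrite -[w r 0 ^+ 2]real_normK ?num_real //; nra.
Qed.

Lemma vnorm_mul_crude p q (X : 'M[R]_(p, q)) (v : 'cV[R]_q) :
  vnorm (X *m v) <= Num.sqrt (\sum_r (\sum_k `|X r k|) ^+ 2) * vnorm v.
Proof.
apply: vnorm_coord_le; first exact: vnorm_ge0.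
move=> r; rewrite mxE mulr_suml.
apply: le_trans (ler_norm_sum _ _ _) _; apply: ler_sum => k _.
rewrite normrM; apply: ler_wpM2l; [exact: normr_ge0 | exact: coord_le].
Qed.

End Norms.
Section Opnorm.
Variable R : realType.

Lemma opnorm_ubound p q (X : 'M[R]_(p, q)) :
  has_ubound [set vnorm (X *m v) | v in [set v : 'cV[R]_q | vnorm v = 1]].
Proof.
exists (Num.sqrt (\sum_r (\sum_k `|X r k|) ^+ 2)) => y [v /= hv <-].
by have := vnorm_mul_crude X v; rewrite hv mulr1.
Qed.

Lemma opnorm_ub p q (X : 'M[R]_(p, q)) v : vnorm (X *m v) <= opnorm X * vnorm v.
Proof.
have [v0|nv] := eqVneq (vnorm v) 0.
  by rewrite (vnorm_eq0 v0) mulmx0 !vnorm0 mulr0.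
have s0 : 0 < vnorm v by rewrite lt_neqAle eq_sym nv vnorm_ge0.
pose u := (vnorm v)^-1 *: v.
have hu : vnorm u = 1 by rewrite vnormZ ger0_norm ?invr_ge0 ?vnorm_ge0 // mulVf.
have : vnorm (X *m u) <= opnorm X.
  apply: ub_le_sup; first exact: opnorm_ubound.
  by exists u.
rewrite /u -scalemxAr vnormZ ger0_norm ?invr_ge0 ?vnorm_ge0 //.
by rewrite -(ler_pM2l s0) mulrA mulfV ?mul1r // mulrC.
Qed.

Lemma opnorm_ge0 p q (X : 'M[R]_(p, q)) : 0 <= opnorm X.
Proof.
have [[v hv]|nv] := pselect (exists v : 'cV[R]_q, vnorm v = 1).
  by apply: le_trans (vnorm_ge0 (X *m v)) _; have := opnorm_ub X v; rewrite hv mulr1.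
rewrite /opnorm; set E := (X in sup X).
have -> : E = set0.
  by rewrite predeqE => y; split => // -[w hw _]; apply: nv; exists w.
by rewrite sup0.
Qed.

Lemma opnorm_le p q (X : 'M[R]_(p, q)) (c : R) :
  0 <= c -> (forall v, vnorm (X *m v) <= c * vnorm v) -> opnorm X <= c.
Proof.
move=> c0 h.
have [[v hv]|nv] := pselect (exists v : 'cV[R]_q, vnorm v = 1).
  apply: ge_sup; first by exists (vnorm (X *m v)); exists v.
  by move=> y [w /= hw <-]; have := h w; rewrite hw mulr1.
rewrite /opnorm; set E := (X in sup X).
have -> : E = set0.
  by rewrite predeqE => y; split => // -[w hw _]; apply: nv; exists w.
by rewrite sup0.
Qed.

Lemma opnormD p q (X Y : 'M[R]_(p, q)) : opnorm (X + Y) <= opnorm X + opnorm Y.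
Proof.
apply: opnorm_le; first by rewrite addr_ge0 ?opnorm_ge0.
move=> v; rewrite mulmxDl mulrDl.
apply: le_trans (vnormD _ _) _; exact: lerD (opnorm_ub _ _) (opnorm_ub _ _).
Qed.

Lemma opnormM p q r (X : 'M[R]_(p, q)) (Y : 'M[R]_(q, r)) :
  opnorm (X *m Y) <= opnorm X * opnorm Y.
Proof.
apply: opnorm_le; first by rewrite mulr_ge0 ?opnorm_ge0.
move=> v; rewrite -mulmxA; apply: le_trans (opnorm_ub _ _) _.
rewrite -mulrA; apply: ler_wpM2l; [exact: opnorm_ge0 | exact: opnorm_ub].
Qed.

Lemma opnormT p q (X : 'M[R]_(p, q)) : opnorm (X^T) <= opnorm X.
Proof.
apply: opnorm_le; first exact: opnorm_ge0.
move=> v; set t := vnorm (X^T *m v).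
have h : t ^+ 2 <= vnorm v * (opnorm X * t).
  rewrite /t vnorm_sq -dot_mul.
  apply: le_trans (CS _ _) _; apply: ler_wpM2l; first exact: vnorm_ge0.
  exact: opnorm_ub.
have t0 : 0 <= t by exact: vnorm_ge0.
have [->|tn] := eqVneq t 0; first by rewrite mulr_ge0 ?opnorm_ge0 ?vnorm_ge0.
have tp : 0 < t by rewrite lt_neqAle eq_sym tn t0.
rewrite -(ler_pM2r tp) -expr2.
have -> : opnorm X * vnorm v * t = vnorm v * (opnorm X * t) by ring.
exact: h.
Qed.

Lemma opnorm0 p q : opnorm (0 : 'M[R]_(p, q)) = 0.
Proof.
apply/le_anti; rewrite opnorm_ge0 andbT; apply: opnorm_le => // v.
by rewrite mul0mx vnorm0 mul0r.
Qed.

Lemma opnorm1 k : opnorm (1%:M : 'M[R]_k) <= 1.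
Proof. by apply: opnorm_le => // v; rewrite mul1mx mul1r. Qed.

Lemma opnorm_sum p q (I : Type) (r : seq I) (P : pred I) (F : I -> 'M[R]_(p, q)) :
  opnorm (\sum_(i <- r | P i) F i) <= \sum_(i <- r | P i) opnorm (F i).
Proof.
apply: (big_rec2 (fun A x => opnorm A <= x)); first by rewrite opnorm0.
move=> i A x _ h; apply: le_trans (opnormD _ _) _; exact: lerD.
Qed.

Lemma opnorm_rowsub1 p p' (f : 'I_p' -> 'I_p) :
  injective f -> opnorm (rowsub f (1%:M : 'M[R]_p)) <= 1.
Proof.
move=> inj; apply: opnorm_le => // v; rewrite mul1r.
rewrite mul_rowsub_mx mul1mx !vnormE ler_sqrt ?dot_ge0 // !dotE.
have := @sum_inj_le R _ _ f (fun r => v r 0 * v r 0) inj.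
move=> /(_ (fun j => ltac:(by rewrite -expr2 sqr_ge0))) H.
apply: le_trans H; rewrite le_eqVlt; apply/orP; left; apply/eqP.
by apply: eq_bigr => i _; rewrite mxE.
Qed.

Lemma opnorm_mxsub p q p' q' (f : 'I_p' -> 'I_p) (g : 'I_q' -> 'I_q) (X : 'M[R]_(p, q)) :
  injective f -> injective g -> opnorm (mxsub f g X) <= opnorm X.
Proof.
move=> injf injg.
have -> : mxsub f g X = rowsub f (1%:M : 'M[R]_p) *m X *m colsub g (1%:M : 'M[R]_q).
  by apply/matrixP => i j; rewrite mul_rowsub_mx mul1mx mulmx_colsub mulmx1 !mxE.
apply: le_trans (opnormM _ _) _.
have hg : opnorm (colsub g (1%:M : 'M[R]_q)) <= 1.
  rewrite -[colsub g _]trmxK trmx_mxsub trmx1.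
  apply: le_trans (opnormT _) _; exact: opnorm_rowsub1.
have hf := opnorm_rowsub1 injf.
apply: le_trans (ler_wpM2l (opnorm_ge0 _) hg) _; rewrite mulr1.
apply: le_trans (opnormM _ _) _.
apply: le_trans (ler_wpM2r (opnorm_ge0 _) hf) _; by rewrite mul1r.
Qed.

End Opnorm.
Section Blocks.
Variable R : realType.
Variable N : nat.

Definition sel p (ag : 'I_p -> 'I_N) (a : 'I_N) :
  'I_#|[pred r | ag r == a]| -> 'I_p := fun x => enum_val x.
Arguments sel {p} ag a x.

Lemma sel_inj p (ag : 'I_p -> 'I_N) a : injective (sel ag a).
Proof. exact: enum_val_inj. Qed.

Lemma sel_ag p (ag : 'I_p -> 'I_N) a x : ag (sel ag a x) = a.
Proof. by have := enum_valP x; rewrite /sel inE => /eqP. Qed.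
Arguments sel_ag {p} ag a x.

Lemma blkE p q (ar : 'I_p -> 'I_N) (ac : 'I_q -> 'I_N) (X : 'M[R]_(p, q)) l j :
  blk ar ac X l j = mxsub (sel ar l) (sel ac j) X.
Proof. by apply/matrixP => x y; rewrite !mxE. Qed.

Lemma opnorm_blk p q (ar : 'I_p -> 'I_N) (ac : 'I_q -> 'I_N) (X : 'M[R]_(p, q)) l j :
  opnorm (blk ar ac X l j) <= opnorm X.
Proof. by rewrite blkE; apply: opnorm_mxsub; apply: sel_inj. Qed.

Lemma blk_mul p q r (ar : 'I_p -> 'I_N) (am : 'I_q -> 'I_N) (ac : 'I_r -> 'I_N)
  (X : 'M[R]_(p, q)) (Y : 'M[R]_(q, r)) l j :
  blk ar ac (X *m Y) l j = \sum_a blk ar am X l a *m blk am ac Y a j.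
Proof.
apply/matrixP => x y; rewrite !mxE summxE.
rewrite (partition_big am predT) //=; apply: eq_bigr => a _.
rewrite mxE.
rewrite (big_enum_val (fun k => X (enum_val x) k * Y k (enum_val y))) /=.
  by apply: eq_bigr => b _; rewrite !mxE.
Qed.

Lemma blk_tr p q (ar : 'I_p -> 'I_N) (ac : 'I_q -> 'I_N) (X : 'M[R]_(p, q)) l j :
  blk ac ar X^T l j = (blk ar ac X j l)^T.
Proof. by apply/matrixP => x y; rewrite !mxE. Qed.

Lemma blkD p q (ar : 'I_p -> 'I_N) (ac : 'I_q -> 'I_N) (X Y : 'M[R]_(p, q)) l j :
  blk ar ac (X + Y) l j = blk ar ac X l j + blk ar ac Y l j.
Proof. by apply/matrixP => x y; rewrite !mxE. Qed.

Lemma blk_sum p q (ar : 'I_p -> 'I_N) (ac : 'I_q -> 'I_N) (I : Type) (s : seq I)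
  (F : I -> 'M[R]_(p, q)) l j :
  blk ar ac (\sum_(t <- s) F t) l j = \sum_(t <- s) blk ar ac (F t) l j.
Proof. by apply/matrixP => x y; rewrite !mxE !summxE; apply: eq_bigr => t _; rewrite mxE. Qed.

Lemma blk1_off p (ag : 'I_p -> 'I_N) a b :
  a != b -> blk ag ag (1%:M : 'M[R]_p) a b = 0.
Proof.
move=> ab; apply/matrixP => x y; rewrite !mxE.
case: eqP => // h; move: ab; by rewrite -(sel_ag ag a x) -(sel_ag ag b y) /sel h eqxx.
Qed.

Lemma blk_only p (ag : 'I_p -> 'I_N) (S : 'M[R]_p) i a b :
  blk ag ag (only_blk ag S i) a b = if (a == i) && (b == i) then blk ag ag S a b else 0.
Proof.
apply/matrixP => x y; rewrite !mxE.
have := sel_ag ag a x; have := sel_ag ag b y; rewrite /sel => -> ->.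
by case: ifP; rewrite ?mxE.
Qed.

Lemma blk_only_conj p (ag : 'I_p -> 'I_N) (S : 'M[R]_p) (W : 'M[R]_p) i l j :
  blk ag ag (W^T *m only_blk ag S i *m W) l j
  = (blk ag ag W i l)^T *m blk ag ag S i i *m blk ag ag W i j.
Proof.
rewrite (blk_mul _ ag) (bigD1 i) //= big1 ?addr0; last first.
  move=> b bi; rewrite (blk_mul _ ag) big1 ?mul0mx // => a _.
  by rewrite blk_only (negbTE bi) andbF mulmx0.
rewrite (blk_mul _ ag) (bigD1 i) //= big1 ?addr0; last first.
  by move=> a ai; rewrite blk_only (negbTE ai) /= mulmx0.
by rewrite blk_only eqxx blk_tr.
Qed.

Lemma blk_rowconj p q (agp : 'I_p -> 'I_N) (agq : 'I_q -> 'I_N) (Z : 'M[R]_(q, p)) i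
  (C : 'M[R]_#|[pred r | agq r == i]|) l j :
  blk agp agp ((blkrow agq Z i)^T *m C *m blkrow agq Z i) l j
  = (blk agq agp Z i l)^T *m C *m blk agq agp Z i j.
Proof.
apply/matrixP => x y; rewrite !mxE; apply: eq_bigr => b _; rewrite !mxE.
by congr (_ * _); apply: eq_bigr => a _; rewrite !mxE.
Qed.

End Blocks.
Section Arith.
Variable R : realType.

Lemma geo_up (z : R) T : 2 <= z -> \sum_(0 <= t < T.+1) z ^+ t <= 2 * z ^+ T.
Proof.
move=> z2; elim: T => [|T IH]; first by rewrite big_nat1 expr0; lra.
rewrite big_nat_recr //= exprS.
have h0 : 0 <= z ^+ T by rewrite exprn_ge0 //; lra.
nra.
Qed.

Lemma geo_tail (q : R) T k :
  (\sum_(T <= t < T + k) q ^+ t) * (1 - q) = q ^+ T - q ^+ (T + k).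
Proof.
elim: k => [|k IH]; first by rewrite addn0 big_geq // mul0r subrr.
rewrite addnS big_nat_recr /=; last exact: leq_addr.
by rewrite mulrDl IH exprS; ring.
Qed.

Lemma geo_tail_le (q : R) T T' : 0 <= q < 1 -> (T <= T')%N ->
  \sum_(T <= t < T') q ^+ t <= q ^+ T / (1 - q).
Proof.
move=> /andP[q0 q1] /subnKC <-.
have h : 0 < 1 - q by lra.
rewrite ler_pdivlMr // geo_tail lerBlDr lerDl exprn_ge0 //.
Qed.

Lemma bern (y : R) k : 0 <= y -> 1 + k%:R * y <= (1 + y) ^+ k.
Proof.
move=> y0; elim: k => [|k IH]; first by rewrite mul0r addr0 expr0.
rewrite exprS -natr1.
have h0 : 0 <= k%:R :> R by rewrite ler0n.
nra.
Qed.

Lemma small_pow (q eps C : R) : 0 < q -> q < 1 -> 0 < eps -> 0 <= C ->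
  forall T, exists T', (T <= T')%N /\ C * q ^+ T' <= eps.
Proof.
move=> q0 q1 e0 C0 T.
set y := q^-1 - 1.
have y0 : 0 < y by rewrite /y subr_gt0 invf_gt1.
have hb := @archi_boundP R (C / (eps * y)) (ltac:(by rewrite divr_ge0 // mulr_ge0 // ltW)).
set b := Num.bound _ in hb.
exists (T + b)%N; split; first exact: leq_addr.
have hqy : q * (1 + y) = 1 by rewrite /y addrC subrK mulfV // gt_eqF.
have hpos : 0 < (1 + y) ^+ (T + b) by rewrite exprn_gt0 //; lra.
have hk : C <= eps * (1 + y) ^+ (T + b).
  apply: le_trans (_ : eps * (1 + (T + b)%:R * y) <= _); last first.
    by rewrite ler_pM2l // bern // ltW.
  have : C / (eps * y) < (T + b)%:R.
    by apply: lt_le_trans hb _; rewrite ler_nat leq_addl.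
  rewrite ltr_pdivrMr ?mulr_gt0 //.
  have : 0 <= (T + b)%:R :> R by rewrite ler0n.
  nra.
by rewrite -(ler_pM2r hpos) -mulrA -exprMn hqy expr1n mulr1.
Qed.

Lemma tail_bound (x cQ c1 Cp q z e0 e : R) (f : nat -> R) :
  0 < q -> q < 1 -> 0 <= cQ -> 0 <= c1 -> 0 <= Cp -> 0 <= e -> 0 <= e0 ->
  (forall T', x <= \sum_(0 <= t < T') f t + Cp * q ^+ T') ->
  (forall t, f t <= cQ * z ^+ t * e0) -> (forall t, f t <= c1 * q ^+ t) ->
  (exists T : nat, q ^+ T <= e /\ (T = 0%N \/ (2 <= z /\ z ^+ T.-1 * e0 <= e))) ->
  x <= (c1 / (1 - q) + 2 * cQ) * e.
Proof.
move=> q0 q1 cQ0 c10 Cp0 e0' e00 hx hf1 hf2 [T [hqT hT]].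
apply/ler_addgt0Pr => eps eps0.
have [T' [TT' hT']] := small_pow q0 q1 eps0 Cp0 T.
apply: le_trans (hx T') _.
rewrite (big_cat_nat (n := T)) //=.
have h1q : 0 < 1 - q by lra.
have hA : \sum_(0 <= t < T) f t <= 2 * cQ * e.
  case: hT => [->|[z2 hz]]; first by rewrite big_geq // !mulr_ge0.
  case: T hqT TT' hz => [|T] hqT TT' hz; first by rewrite big_geq // !mulr_ge0.
  apply: le_trans (ler_sum _ (fun t _ => hf1 t)) _.
  have -> : \sum_(0 <= i < T.+1) cQ * z ^+ i * e0 = cQ * e0 * \sum_(0 <= i < T.+1) z ^+ i.
    by rewrite mulr_sumr; apply: eq_bigr => t _; ring.
  have hg := geo_up T z2.
  move: hz => /= hz.
  have : cQ * e0 * \sum_(0 <= i < T.+1) z ^+ i <= cQ * e0 * (2 * z ^+ T).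
    by apply: ler_wpM2l => //; rewrite mulr_ge0.
  have : 0 <= cQ * e0 by rewrite mulr_ge0.
  nra.
have hB : \sum_(T <= t < T') f t <= c1 / (1 - q) * e.
  apply: le_trans (ler_sum _ (fun t _ => hf2 t)) _.
  rewrite -mulr_sumr.
  have hg : \sum_(T <= t < T') q ^+ t <= q ^+ T / (1 - q).
    by apply: geo_tail_le => //; rewrite ltW ?q1 ?andbT.
  apply: le_trans (ler_wpM2l c10 hg) _.
  have -> : c1 * (q ^+ T / (1 - q)) = c1 / (1 - q) * q ^+ T by rewrite mulrA [_ * _ / _]mulrAC.
  by rewrite ler_wpM2l // divr_ge0 // ltW.
have : c1 / (1 - q) * e + 2 * cQ * e + eps = (c1 / (1 - q) + 2 * cQ) * e + eps by ring.
lra.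
Qed.

End Arith.
Section ChooseT.
Variable R : realType.

Lemma choose_T (gs rho L : R) (D : nat) : 0 < gs -> 0 < rho -> ((0 < D)%N -> 2 <= L) ->
  exists T : nat, expR (- (2 * rho)) ^+ T <= expR (- (rho * gs / (rho + ln L) * D%:R)) /\
   (T = 0%N \/ (2 <= L ^+ 2 /\
     (L ^+ 2) ^+ T.-1 * expR (- (gs * D%:R)) <= expR (- (rho * gs / (rho + ln L) * D%:R)))).
Proof.
move=> gs0 rho0; case: D => [|D] hL.
  by exists 0%N; rewrite expr0 mulr0 oppr0 expR0; split => //; left.
have L2 := hL isT.
have lnL : 0 < ln L by apply: ln_gt0; lra.
set Dr := D.+1%:R.
have Dr0 : 0 < Dr by rewrite ltr0n.
set y := gs * Dr / (2 * (rho + ln L)).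
have den : 0 < 2 * (rho + ln L) by rewrite mulr_gt0 //; lra.
have y0 : 0 < y by rewrite divr_gt0 // mulr_gt0.
have hex : exists k : nat, y <= k%:R.
  by exists (Num.bound y); apply: ltW; apply: archi_boundP; apply: ltW.
case: (ex_minnP hex) => T hT hmin.
have hgP : rho * gs / (rho + ln L) * Dr = 2 * rho * y.
  by rewrite /y; field; apply: lt0r_neq0; lra.
exists T; split.
  rewrite -expRM_natr ler_expR hgP.
  have : 0 <= rho by lra.
  nra.
right; split; first by rewrite expr2; nra.
have T0 : (0 < T)%N.
  rewrite lt0n; apply/eqP => T0; move: hT; rewrite T0; lra.
have hT1 : (T.-1)%:R < y.
  rewrite ltNge; apply/negP => /hmin; case: T T0 {hT hmin} => // T _ /=.
  by rewrite ltnn.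
have Lp : 0 < L by lra.
rewrite -exprM -[X in X ^+ _](lnK Lp) -expRM_natr -expRD ler_expR.
rewrite natrM hgP.
have : rho * gs / (rho + ln L) * Dr = gs * Dr - 2 * y * ln L.
  by rewrite /y; field; apply: lt0r_neq0; lra.
rewrite hgP => h.
have : 0 <= (T.-1)%:R :> R by rewrite ler0n.
nra.
Qed.

End ChooseT.
Lemma eqle (R : realType) (x y : R) : x = y -> x <= y.
Proof. by move->. Qed.

Lemma opnorm3 (R : realType) p q r (X : 'M[R]_(q, p)) (C : 'M[R]_(q, q)) (Y : 'M[R]_(q, r)) :
  opnorm (X^T *m C *m Y) <= opnorm X * opnorm C * opnorm Y.
Proof.
apply: le_trans (opnormM _ _) _; apply: ler_wpM2r; first exact: opnorm_ge0.
apply: le_trans (opnormM _ _) _; apply: ler_wpM2r; first exact: opnorm_ge0.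
exact: opnormT.
Qed.

Theorem theorem1 (R : realType) (N : nat) (dist : 'I_N -> 'I_N -> nat)
  (dist_refl : forall i, dist i i = 0%N)
  (dist_sym : forall i j, dist i j = dist j i)
  (dist_tri : forall i j k, (dist i k <= dist i j + dist j k)%N)
  (n m : nat) (agn : 'I_n -> 'I_N) (agm : 'I_m -> 'I_N)
  (agn_mono : forall x y : 'I_n, (x <= y)%N -> (agn x <= agn y)%N)
  (agm_mono : forall x y : 'I_m, (x <= y)%N -> (agm x <= agm y)%N)
  (S : 'M[R]_n) (Rm : 'M[R]_m)
  (S_bd : block_diagonal agn S) (R_bd : block_diagonal agm Rm)
  (S_psd : forall i, psd (blk agn agn S i i))
  (R_pd : forall i, pd (blk agm agm Rm i i))
  (A : 'M[R]_n) (B : 'M[R]_(n, m)) (K : 'M[R]_(m, n))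
  (cA cB cK gsys tau rho : R) (kappa : nat)
  (hgsys : 0 < gsys) (hcA : 1 <= cA) (hcB : 1 <= cB)
  (hA : SED dist agn agn A cA gsys) (hB : SED dist agn agm B cB gsys)
  (hkappa : (1 <= kappa)%N) (hK : in_Kkappa dist agm agn kappa K)
  (hKsed : SED dist agm agn K cK gsys)
  (hstab : tr_stable (A + B *m K) tau rho)
  (i : 'I_N) (P : 'M[R]_n) :
  let Q := only_blk agn S i + (blkrow agm K i)^T *m blk agm agm Rm i i *m blkrow agm K i in
  P = Q + (A + B *m K)^T *m P *m (A + B *m K) ->
  SED_away dist agn agn P
    (opnorm Q * tau ^+ 2 / (1 - expR (- (2 * rho)))
       + 2 * (opnorm (blk agn agn S i i) + opnorm (blk agm agm Rm i i) * cK ^+ 2))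
    (rho * gsys / (rho + ln (N%:R * cA + N%:R ^+ 2 * cB * cK)))
    i.
Proof.
move=> Q hP l j.
case: hstab => htau [hrho hpowM].
set M := A + B *m K in hP hpowM *.
set L := N%:R * cA + N%:R ^+ 2 * cB * cK.
set cM := cA + N%:R * cB * cK.
pose E (d : nat) := expR (- (gsys * d%:R)).
have hA' : forall a b, opnorm (blk agn agn A a b) <= cA * E (dist a b) := hA.
have hB' : forall a b, opnorm (blk agn agm B a b) <= cB * E (dist a b) := hB.
have hK' : forall a b, opnorm (blk agm agn K a b) <= cK * E (dist a b) := hKsed.
have Epos d : 0 < E d := expR_gt0 _.
have Emul x y : E x * E y = E (x + y).
  by rewrite /E -expRD natrD; congr expR; ring.
have Ele x y : (x <= y)%N -> E y <= E x.
  by move=> h; rewrite /E ler_expR lerN2 ler_pM2l // ler_nat.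
have cK0 : 0 <= cK.
  have := hK' i i; have := opnorm_ge0 (blk agm agn K i i); have := Epos (dist i i).
  nra.
have cA0 : 0 <= cA by lra.
have cB0 : 0 <= cB by lra.
have N0 : 0 <= N%:R :> R by rewrite ler0n.
have LcM : L = N%:R * cM by rewrite /L /cM; ring.
have cM0 : 0 <= cM by rewrite /cM addr_ge0 // !mulr_ge0.
have L0 : 0 <= L by rewrite LcM mulr_ge0.
have hM a b : opnorm (blk agn agn M a b) <= cM * E (dist a b).
  rewrite /M blkD (blk_mul _ agm).
  apply: le_trans (opnormD _ _) _.
  apply: le_trans (lerD (hA' a b) (opnorm_sum _ _ _)) _.
  have : \sum_(c < N) opnorm (blk agn agm B a c *m blk agm agn K c b)
         <= \sum_(c < N) cB * cK * E (dist a b).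
    apply: ler_sum => c _; apply: le_trans (opnormM _ _) _.
    apply: le_trans (ler_pM (opnorm_ge0 _) (opnorm_ge0 _) (hB' a c) (hK' c b)) _.
    rewrite mulrACA Emul; apply: ler_wpM2l; first by rewrite mulr_ge0.
    exact: Ele (dist_tri _ _ _).
  rewrite sumr_const card_ord -mulr_natl => h.
  apply: le_trans (lerD (le_refl _) h) _.
  by apply: eqle; rewrite /cM; ring.
have hstep p (ar : 'I_p -> 'I_N) (Z : 'M[R]_(p, n)) c : 0 <= c ->
    (forall a, opnorm (blk ar agn Z i a) <= c * E (dist i a)) ->
    forall b, opnorm (blk ar agn (Z *m M) i b) <= c * L * E (dist i b).
  move=> c0 hZ b; rewrite (blk_mul _ agn).
  apply: le_trans (opnorm_sum _ _ _) _.
  apply: le_trans (_ : _ <= \sum_(a < N) c * cM * E (dist i b)) _.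
    apply: ler_sum => a _; apply: le_trans (opnormM _ _) _.
    apply: le_trans (ler_pM (opnorm_ge0 _) (opnorm_ge0 _) (hZ a) (hM a b)) _.
    rewrite mulrACA Emul; apply: ler_wpM2l; first by rewrite mulr_ge0.
    exact: Ele (dist_tri _ _ _).
  by rewrite sumr_const card_ord -mulr_natl LcM; apply: eqle; ring.
have hpow p (ar : 'I_p -> 'I_N) (X : 'M[R]_(p, n)) c : 0 <= c ->
    (forall a, opnorm (blk ar agn X i a) <= c * E (dist i a)) ->
    forall t a, opnorm (blk ar agn (X *m M ^+ t) i a) <= c * L ^+ t * E (dist i a).
  move=> c0 hX; elim => [|t IH] a.
    by rewrite expr0 -idmxE mulmx1 mulr1; exact: hX.
  rewrite exprSr -mulmxE mulmxA exprSr mulrA.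
  apply: hstep => //; first by rewrite mulr_ge0 // exprn_ge0.
have hY t a : opnorm (blk agn agn (M ^+ t) i a) <= L ^+ t * E (dist i a).
  have := hpow _ agn 1%:M 1 ler01 _ t a; rewrite mul1mx mul1r; apply.
  move=> b; have [<-|bi] := eqVneq i b.
    rewrite mul1r dist_refl; apply: le_trans; first exact: opnorm_blk.
    by apply: le_trans; first exact: opnorm1; rewrite /E mulr0 oppr0 expR0.
  by rewrite blk1_off // opnorm0 mul1r ltW.
have hZ t a : opnorm (blk agm agn (K *m M ^+ t) i a) <= cK * L ^+ t * E (dist i a).
  exact: hpow.
have hun T' : P = \sum_(t < T') ((M ^+ t)^T *m Q *m M ^+ t) + (M ^+ T')^T *m P *m M ^+ T'.
  elim: T' => [|T' IH]; first by rewrite big_ord0 add0r expr0 -idmxE trmx1 mul1mx mulmx1.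
  have e : (M ^+ T')^T *m P *m M ^+ T'
       = (M ^+ T')^T *m Q *m M ^+ T' + (M ^+ T'.+1)^T *m P *m M ^+ T'.+1.
    rewrite {1}hP mulmxDr mulmxDl; congr (_ + _).
    by rewrite exprS -mulmxE trmx_mul !mulmxA.
  by rewrite {1}IH e big_ord_recr /= addrA.
set cQ := opnorm (blk agn agn S i i) + opnorm (blk agm agm Rm i i) * cK ^+ 2.
set D := maxn (dist i l) (dist i j).
have hterm t : opnorm (blk agn agn ((M ^+ t)^T *m Q *m M ^+ t) l j)
               <= cQ * (L ^+ 2) ^+ t * E D.
  set W := M ^+ t.
  rewrite /Q mulmxDr mulmxDl blkD.
  have hKW : blkrow agm K i *m W = blkrow agm (K *m W) i.
    by apply/matrixP => x y; rewrite !mxE; apply: eq_bigr => k _; rewrite mxE.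
  have -> : W^T *m ((blkrow agm K i)^T *m blk agm agm Rm i i *m blkrow agm K i) *m W
      = (blkrow agm (K *m W) i)^T *m blk agm agm Rm i i *m blkrow agm (K *m W) i.
    by rewrite -hKW trmx_mul !mulmxA.
  rewrite blk_only_conj blk_rowconj.
  apply: le_trans (opnormD _ _) _.
  apply: le_trans (lerD (opnorm3 _ _ _) (opnorm3 _ _ _)) _.
  set ya := opnorm (blk agn agn W i l); set yb := opnorm (blk agn agn W i j).
  set za := opnorm (blk agm agn (K *m W) i l); set zb := opnorm (blk agm agn (K *m W) i j).
  set s := opnorm (blk agn agn S i i); set r := opnorm (blk agm agm Rm i i).
  have s0 : 0 <= s := opnorm_ge0 _.
  have r0 : 0 <= r := opnorm_ge0 _.
  have Lt0 : 0 <= L ^+ t by rewrite exprn_ge0.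
  have h1 : ya * s * yb <= L ^+ t * E (dist i l) * s * (L ^+ t * E (dist i j)).
    apply: ler_pM; rewrite ?mulr_ge0 ?opnorm_ge0 //; last exact: hY.
    by apply: ler_pM; rewrite ?opnorm_ge0 //; exact: hY.
  have h2 : za * r * zb <= cK * L ^+ t * E (dist i l) * r * (cK * L ^+ t * E (dist i j)).
    apply: ler_pM; rewrite ?mulr_ge0 ?opnorm_ge0 //; last exact: hZ.
    by apply: ler_pM; rewrite ?opnorm_ge0 //; exact: hZ.
  have h3 : E (dist i l) * E (dist i j) <= E D.
    by rewrite Emul; apply: Ele; rewrite geq_max leq_addr leq_addl.
  have h4 := ler_wpM2l (mulr_ge0 (addr_ge0 s0 (mulr_ge0 r0 (sqr_ge0 cK))) (exprn_ge0 t (sqr_ge0 L))) h3.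
  apply: le_trans (lerD h1 h2) _.
  apply: le_trans h4; apply: eqle; rewrite /cQ -/s -/r exprAC; ring.
have hQt t : opnorm (blk agn agn ((M ^+ t)^T *m Q *m M ^+ t) l j)
               <= opnorm Q * tau ^+ 2 * expR (- (2 * rho)) ^+ t.
  apply: le_trans; first exact: opnorm_blk.
  apply: le_trans (opnorm3 _ _ _) _.
  have hm := hpowM t.
  have m0 : 0 <= opnorm (M ^+ t) := opnorm_ge0 _.
  have q0 : 0 <= opnorm Q := opnorm_ge0 _.
  apply: le_trans (ler_pM (mulr_ge0 m0 q0) m0 (ler_pM m0 q0 hm (le_refl _)) hm) _.
  apply: eqle; rewrite -expRM_natr.
  have -> : expR (- (2 * rho) * t%:R) = expR (- (rho * t%:R)) * expR (- (rho * t%:R)).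
    by rewrite -expRD; congr expR; ring.
  ring.
have hrem T' : opnorm (blk agn agn ((M ^+ T')^T *m P *m M ^+ T') l j)
               <= opnorm P * tau ^+ 2 * expR (- (2 * rho)) ^+ T'.
  apply: le_trans; first exact: opnorm_blk.
  apply: le_trans (opnorm3 _ _ _) _.
  have hm := hpowM T'.
  have m0 : 0 <= opnorm (M ^+ T') := opnorm_ge0 _.
  have q0 : 0 <= opnorm P := opnorm_ge0 _.
  apply: le_trans (ler_pM (mulr_ge0 m0 q0) m0 (ler_pM m0 q0 hm (le_refl _)) hm) _.
  apply: eqle; rewrite -expRM_natr.
  have -> : expR (- (2 * rho) * T'%:R) = expR (- (rho * T'%:R)) * expR (- (rho * T'%:R)).
    by rewrite -expRD; congr expR; ring.
  ring.
have hL2 : (0 < D)%N -> 2 <= L.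
  move=> D0.
  have N2 : (1 < N)%N.
    rewrite ltnNge; apply/negP => N1.
    have eq1 (a : 'I_N) : a = i.
      apply: val_inj => /=.
      by have := ltn_ord a; have := ltn_ord i; move: N1; clear; lia.
    by move: D0; rewrite /D (eq1 l) (eq1 j) dist_refl.
  have N2' : 2 <= N%:R :> R by rewrite (ler_nat R 2 N).
  have : 0 <= N%:R ^+ 2 * cB * cK by rewrite !mulr_ge0 // sqr_ge0.
  rewrite /L; nra.
have [T hT] := choose_T hgsys hrho hL2.
have e0 : 0 <= E D by apply: ltW.
apply: (@tail_bound _ _ cQ _ (opnorm P * tau ^+ 2) _ (L ^+ 2) (E D) _
          (fun t => opnorm (blk agn agn ((M ^+ t)^T *m Q *m M ^+ t) l j))).
- exact: expR_gt0.
- by rewrite expR_lt1 oppr_lt0 mulr_gt0.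
- by rewrite /cQ addr_ge0 ?opnorm_ge0 // mulr_ge0 ?opnorm_ge0 // sqr_ge0.
- by rewrite mulr_ge0 ?opnorm_ge0 // sqr_ge0.
- by rewrite mulr_ge0 ?opnorm_ge0 // sqr_ge0.
- exact: expR_ge0.
- exact: e0.
- move=> T'; rewrite {1}(hun T') blkD blk_sum big_mkord.
  apply: le_trans (opnormD _ _) _; apply: lerD; last exact: hrem.
  exact: opnorm_sum.
- exact: hterm.
- exact: hQt.
- by exists T.
Qed.
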